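(* Let $X$ be a compact countable metric space and $f\colon X\to X$ a continuous map. If $f$ has a scrambled pair, then there exist $\delta>0$ and an infinite $\delta$-scrambled set for $f$.
   Context: For $\delta>0$, a pair $(u,v)$ of points is $\delta$-scrambled if $\liminf_{n\to\infty}d(f^n(u),f^n(v))=0$ and $\limsup_{n\to\infty}d(f^n(u),f^n(v))\ge\delta$; it is a scrambled pair if it is $\delta$-scrambled for some $\delta>0$. A set is $\delta$-scrambled if every pair of its distinct points is $\delta$-scrambled. *)

(* Defs.v *)
From Stdlib Require Import Reals.
Open Scope R_scope.

Record is_metric {X : Type} (d : X -> X -> R) : Prop := {
  met_nonneg : forall x y, 0 <= d x y;
  met_eq0 : forall x y, d x y = 0 <-> x = y;
  met_sym : forall x y, d x y = d y x;
  met_tri : forall x y z, d x z <= d x y + d y z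
}.

Definition is_open {X : Type} (d : X -> X -> R) (U : X -> Prop) : Prop :=
  forall x, U x -> exists r, 0 < r /\ forall y, d x y < r -> U y.

Definition compact_space {X : Type} (d : X -> X -> R) : Prop :=
  forall (I : Type) (U : I -> X -> Prop),
    (forall i, is_open d (U i)) -> (forall x, exists i, U i x) ->
    exists l : list I, forall x, exists i, List.In i l /\ U i x.

Definition countable_type (X : Type) : Prop :=
  exists g : X -> nat, forall x y, g x = g y -> x = y.

Definition continuous_map {X : Type} (d : X -> X -> R) (f : X -> X) : Prop :=
  forall x eps, 0 < eps -> exists del, 0 < del /\
    forall y, d x y < del -> d (f x) (f y) < eps.

Fixpoint iter {X : Type} (n : nat) (f : X -> X) (x : X) : X :=
  match n with O => x | S m => f (iter m f x) end.

(* liminf_{n} a n = 0 for a nonnegative sequence, unfolded *)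
Definition liminf_eq0 (a : nat -> R) : Prop :=
  forall eps, 0 < eps -> forall N, exists n, (N <= n)%nat /\ a n < eps.

(* limsup_{n} a n >= del, unfolded (limsup in the extended reals) *)
Definition limsup_ge (a : nat -> R) (del : R) : Prop :=
  forall eps, 0 < eps -> forall N, exists n, (N <= n)%nat /\ del - eps < a n.

Definition delta_scrambled_pair {X : Type} (d : X -> X -> R) (f : X -> X)
  (del : R) (u v : X) : Prop :=
  liminf_eq0 (fun n => d (iter n f u) (iter n f v)) /\
  limsup_ge (fun n => d (iter n f u) (iter n f v)) del.

Definition scrambled_pair {X : Type} (d : X -> X -> R) (f : X -> X) (u v : X) : Prop :=
  exists del, 0 < del /\ delta_scrambled_pair d f del u v.

Definition delta_scrambled_set {X : Type} (d : X -> X -> R) (f : X -> X)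
  (del : R) (S : X -> Prop) : Prop :=
  forall u v, S u -> S v -> u <> v -> delta_scrambled_pair d f del u v.

Definition infinite_set {X : Type} (S : X -> Prop) : Prop :=
  forall l : list X, exists x, S x /\ ~ List.In x l.

(* Main.v *)
Require Import Defs.
From Stdlib Require Import Reals Lra Lia List Classical ClassicalEpsilon.
Open Scope R_scope.

Lemma iter_add {X} (f : X -> X) n m x : iter (n + m) f x = iter n f (iter m f x).
Proof. induction n; simpl; congruence. Qed.

Lemma iter_shift {X} (f : X -> X) n x : iter n f (f x) = f (iter n f x).
Proof. induction n; simpl; congruence. Qed.

Lemma iter_mul {X} (f : X -> X) n q x : iter (n * q) f x = iter n (iter q f) x.
Proof. induction n; simpl; auto. rewrite iter_add. congruence. Qed.

Lemma iter_comm {X} (f : X -> X) n q k x :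
  iter n (iter q f) (iter k f x) = iter k f (iter n (iter q f) x).
Proof. rewrite <- !iter_mul, <- !iter_add. f_equal. lia. Qed.

Lemma iter_fix {X} (h : X -> X) n p : h p = p -> iter n h p = p.
Proof. intros H; induction n; simpl; congruence. Qed.

Lemma mtri {X} (d : X -> X -> R) : is_metric d -> forall x y z, d x z <= d x y + d y z.
Proof. intros []; auto. Qed.
Lemma msym {X} (d : X -> X -> R) : is_metric d -> forall x y, d x y = d y x.
Proof. intros []; auto. Qed.
Lemma mnn {X} (d : X -> X -> R) : is_metric d -> forall x y, 0 <= d x y.
Proof. intros []; auto. Qed.
Lemma mxx {X} (d : X -> X -> R) : is_metric d -> forall x, d x x = 0.
Proof. intros [_ H _ _] x; apply H; auto. Qed.
Lemma meq {X} (d : X -> X -> R) : is_metric d -> forall x y, d x y = 0 -> x = y.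
Proof. intros [_ H _ _] x y; apply H. Qed.

Lemma cont_iter {X} (d : X -> X -> R) (f : X -> X) :
  continuous_map d f -> forall q, continuous_map d (iter q f).
Proof.
  intros Hf q; induction q; intros x eps He; simpl.
  - exists eps; split; auto.
  - destruct (Hf (iter q f x) eps He) as [e1 [He1 H1]].
    destruct (IHq x e1 He1) as [e2 [He2 H2]].
    exists e2; split; auto.
Qed.

Lemma cont_upto {X} (d : X -> X -> R) (h : X -> X) :
  continuous_map d h -> forall J z eps, 0 < eps -> exists eta, 0 < eta /\
    forall y, d z y < eta -> forall k, (k <= J)%nat -> d (iter k h z) (iter k h y) < eps.
Proof.
  intros Hh J; induction J; intros z eps He.
  - exists eps; split; auto. intros y Hy k Hk. assert (k = 0%nat) by lia; subst; simpl; auto.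
  - destruct (Hh (iter J h z) eps He) as [e1 [He1 H1]].
    destruct (IHJ z (Rmin eps e1)) as [e2 [He2 H2]].
    { apply Rmin_glb_lt; auto. }
    exists e2; split; auto. intros y Hy k Hk.
    destruct (Nat.eq_dec k (S J)) as [->|Hne].
    + simpl. apply H1. eapply Rlt_le_trans; [apply H2; auto|apply Rmin_r].
    + eapply Rlt_le_trans; [apply H2; auto; lia|apply Rmin_l].
Qed.

Lemma cluster {X} (d : X -> X -> R) : is_metric d -> compact_space d ->
  forall s : nat -> X, exists z, forall eps, 0 < eps -> forall N, exists n, (N <= n)%nat /\ d (s n) z < eps.
Proof.
  intros Hm Hc s. apply NNPP; intro Hn.
  assert (H : forall z, exists eps N, 0 < eps /\ forall n, (N <= n)%nat -> eps <= d (s n) z).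
  { intro z. apply NNPP; intro H1. apply Hn; exists z. intros eps He N.
    apply NNPP; intro H2. apply H1. exists eps, N; split; auto.
    intros n Hn'. apply Rnot_lt_le. intro H3. apply H2. exists n; auto. }
  set (U := fun (i : X * R * nat) y => let '(z, eps, N) := i in
        0 < eps /\ (forall n, (N <= n)%nat -> eps <= d (s n) z) /\ d z y < eps).
  destruct (Hc _ U) as [l Hl].
  - intros [[z eps] N] y [H0 [H1 H2]]. exists (eps - d z y); split; [lra|].
    intros y' Hy'. repeat split; auto. pose proof (mtri d Hm z y y'); lra.
  - intros x. destruct (H x) as [eps [N [H0 H1]]]. exists (x, eps, N). repeat split; auto.
    rewrite (mxx d Hm); auto.
  - set (M := list_max (map (fun i : X * R * nat => snd i) l)).
    destruct (Hl (s M)) as [[[z eps] N] [Hin [H0 [H1 H2]]]].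
    assert (HN : (N <= M)%nat).
    { assert (Hle := le_n M). unfold M at 2 in Hle. apply list_max_le in Hle.
      rewrite Forall_forall in Hle. apply (Hle N). apply in_map_iff. exists (z, eps, N); auto. }
    specialize (H1 M HN). rewrite (msym d Hm) in H1. lra.
Qed.
Lemma le_eps (a b : R) : (forall eps, 0 < eps -> a <= b + eps) -> a <= b.
Proof. intros H. apply Rnot_lt_le; intro H1. specialize (H ((a - b)/2)). lra. Qed.

Lemma baire (T : Type) (e : T -> T -> R) (K : T -> Prop) (g : T -> nat) :
  (forall x y, 0 <= e x y) -> (forall x y, e x y = e y x) ->
  (forall x y z, e x z <= e x y + e y z) ->
  (forall x y, g x = g y -> e x y = 0) ->
  (forall s : nat -> T, (forall n, K (s n)) -> exists z, K z /\
      forall eps, 0 < eps -> forall N, exists n, (N <= n)%nat /\ e (s n) z < eps) ->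
  (exists x, K x) ->
  exists z, K z /\ exists r, 0 < r /\ forall y, K y -> e z y < r -> e z y = 0.
Proof.
  intros Hnn Hsym Htri Hg Hcl [x0 Hx0].
  apply NNPP; intro Hno.
  assert (H : forall z, K z -> forall r, 0 < r -> exists y, K y /\ e z y < r /\ 0 < e z y).
  { intros z Hz r Hr. apply NNPP; intro H1. apply Hno. exists z; split; auto.
    exists r; split; auto. intros y Hy Hy2. apply NNPP; intro H2. apply H1.
    exists y; repeat split; auto. pose proof (Hnn z y); lra. }
  assert (Step : forall (c : T) (r : R) (i : nat), K c -> 0 < r -> exists c' r',
     K c' /\ 0 < r' /\ (forall y, e c' y <= r' -> e c y < r) /\ (forall y, g y = i -> r' < e c' y)).
  { intros c r i Hc Hr.
    destruct (classic (exists y0, g y0 = i)) as [[y0 Hy0]|Hny].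
    - destruct (Rlt_dec 0 (e c y0)) as [Hp|Hz].
      + exists c, (Rmin (r/2) (e c y0 / 2)). repeat split; auto.
        * apply Rmin_glb_lt; lra.
        * intros y Hy. pose proof (Rmin_l (r/2) (e c y0 / 2)); lra.
        * intros y Hy. assert (e y y0 = 0) by (apply Hg; congruence).
          pose proof (Htri c y y0). pose proof (Rmin_r (r/2) (e c y0 / 2)); lra.
      + assert (Hz0 : e c y0 = 0) by (pose proof (Hnn c y0); lra).
        destruct (H c Hc (r/2)) as [c' [Hc' [H1 H2]]]; [lra|].
        exists c', (Rmin (r/4) (e c c' / 2)). repeat split; auto.
        * apply Rmin_glb_lt; lra.
        * intros y Hy. pose proof (Htri c c' y). pose proof (Rmin_l (r/4) (e c c' / 2)); lra.
        * intros y Hy. assert (e y0 y = 0) by (apply Hg; congruence).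
          pose proof (Htri c y0 y). pose proof (Htri c y c'). rewrite (Hsym y c') in *.
          pose proof (Hnn c y). pose proof (Rmin_r (r/4) (e c c' / 2)); lra.
    - exists c, (r/2). split; [auto|split; [lra|split]].
      + intros y Hy; lra.
      + intros y Hy; exfalso; apply Hny; eauto. }
  set (St := {p : T * R | K (fst p) /\ 0 < snd p}).
  assert (Hstep : forall (p : St) (i : nat), {p' : St | 
     (forall y, e (fst (proj1_sig p')) y <= snd (proj1_sig p') -> e (fst (proj1_sig p)) y < snd (proj1_sig p)) /\
     (forall y, g y = i -> snd (proj1_sig p') < e (fst (proj1_sig p')) y)}).
  { intros [[c r] [Hc Hr]] i. simpl in *.
    apply constructive_indefinite_description.
    destruct (Step c r i Hc Hr) as [c' [r' [H1 [H2 [H3 H4]]]]].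
    exists (exist _ (c', r') (conj H1 H2)). simpl. auto. }
  set (p0 := exist (fun p : T * R => K (fst p) /\ 0 < snd p) (x0, 1) (conj Hx0 Rlt_0_1) : St).
  set (sq := fix sq (n : nat) : St := match n with O => p0 | S i => proj1_sig (Hstep (sq i) i) end).
  set (c := fun n => fst (proj1_sig (sq n))).
  set (r := fun n => snd (proj1_sig (sq n))).
  assert (Hcon : forall i, forall y, e (c (S i)) y <= r (S i) -> e (c i) y < r i).
  { intro i. exact (proj1 (proj2_sig (Hstep (sq i) i))). }
  assert (Hex : forall i y, g y = i -> r (S i) < e (c (S i)) y).
  { intro i. exact (proj2 (proj2_sig (Hstep (sq i) i))). }
  assert (HK : forall n, K (c n)). { intro n; unfold c; exact (proj1 (proj2_sig (sq n))). }
  assert (Hnest : forall i j, (i <= j)%nat -> forall y, e (c j) y <= r j -> e (c i) y <= r i).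
  { intros i j Hij; induction Hij; auto. intros y Hy. apply IHHij. left. apply Hcon; auto. }
  assert (Hexx : forall x, e x x = 0) by (intro; apply Hg; auto).
  destruct (Hcl c HK) as [z [Hz Hcz]].
  assert (Hin : forall i, e (c i) z <= r i).
  { intro i. apply le_eps. intros eps He. destruct (Hcz eps He i) as [n [Hn Hn2]].
    assert (e (c i) (c n) <= r i). { apply (Hnest i n Hn). rewrite Hexx.
      pose proof (proj2 (proj2_sig (sq n))); unfold r; lra. }
    pose proof (Htri (c i) (c n) z); lra. }
  specialize (Hex (g z) z eq_refl). specialize (Hin (S (g z))). lra.
Qed.

Definition closedS {X} (d : X -> X -> R) (K : X -> Prop) :=
  forall z, (forall eps, 0 < eps -> exists y, K y /\ d z y < eps) -> K z.

Definition OC {X} (d : X -> X -> R) (f : X -> X) (w : X) : X -> Prop :=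
  fun y => forall eps, 0 < eps -> exists n, d (iter n f w) y < eps.

Lemma closed_cluster {X} (d : X -> X -> R) (K : X -> Prop) : is_metric d -> compact_space d ->
  closedS d K -> forall s : nat -> X, (forall n, K (s n)) -> exists z, K z /\
      forall eps, 0 < eps -> forall N, exists n, (N <= n)%nat /\ d (s n) z < eps.
Proof.
  intros Hm Hc HK s Hs. destruct (cluster d Hm Hc s) as [z Hz]. exists z; split; auto.
  apply HK. intros eps He. destruct (Hz eps He O) as [n [_ Hn]]. exists (s n); split; auto.
  rewrite (msym d Hm); auto.
Qed.

Lemma OC_closed {X} (d : X -> X -> R) f w : is_metric d -> closedS d (OC d f w).
Proof.
  intros Hm z Hz eps He. destruct (Hz (eps/2)) as [y [Hy Hzy]]; [lra|].
  destruct (Hy (eps/2)) as [n Hn]; [lra|]. exists n.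
  pose proof (mtri d Hm (iter n f w) y z). rewrite (msym d Hm y z) in H. lra.
Qed.

Lemma OC_self {X} (d : X -> X -> R) f w : is_metric d -> OC d f w w.
Proof. intros Hm eps He. exists O. simpl. rewrite (mxx d Hm); auto. Qed.

Lemma OC_inv {X} (d : X -> X -> R) f w : is_metric d -> continuous_map d f ->
  forall y, OC d f w y -> OC d f w (f y).
Proof.
  intros Hm Hf y Hy eps He. destruct (Hf y eps He) as [e1 [He1 H1]].
  destruct (Hy e1 He1) as [n Hn]. exists (S n). simpl. rewrite (msym d Hm).
  apply H1. rewrite (msym d Hm); auto.
Qed.

Lemma OC_sub {X} (d : X -> X -> R) f w (K : X -> Prop) : is_metric d ->
  closedS d K -> (forall z, K z -> K (f z)) -> K w -> forall y, OC d f w y -> K y.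
Proof.
  intros Hm HK Hinv Hw y Hy. apply HK. intros eps He. destruct (Hy eps He) as [n Hn].
  exists (iter n f w). split. { clear Hn; induction n; simpl; auto. }
  rewrite (msym d Hm); auto.
Qed.

Definition nextK {X} (d : X -> X -> R) (f : X -> X) (g0 : X -> nat) (Ki : X -> Prop) (i : nat) : X -> Prop :=
  match excluded_middle_informative (exists w, Ki w /\ exists y, g0 y = i /\ ~ OC d f w y) with
  | left H => OC d f (proj1_sig (constructive_indefinite_description _ H))
  | right _ => Ki end.

Lemma nextK_spec {X} (d : X -> X -> R) f g0 Ki i :
  (exists w, Ki w /\ (exists y, g0 y = i /\ ~ OC d f w y) /\ nextK d f g0 Ki i = OC d f w) \/
  (~ (exists w, Ki w /\ exists y, g0 y = i /\ ~ OC d f w y) /\ nextK d f g0 Ki i = Ki).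
Proof.
  unfold nextK. destruct (excluded_middle_informative _) as [H|H].
  - left. destruct (constructive_indefinite_description _ H) as [w Hw]. simpl. exists w; tauto.
  - right; auto.
Qed.

Fixpoint Kseq {X} (d : X -> X -> R) f g0 (D : X -> Prop) (i : nat) : X -> Prop :=
  match i with O => D | S i => nextK d f g0 (Kseq d f g0 D i) i end.

Lemma periodic_point {X} (d : X -> X -> R) (f : X -> X) (D : X -> Prop) :
  is_metric d -> compact_space d -> countable_type X -> continuous_map d f ->
  closedS d D -> (exists z, D z) -> (forall z, D z -> D (f z)) ->
  exists p q, D p /\ (0 < q)%nat /\ iter q f p = p.
Proof.
  intros Hm Hc [g0 Hg0] Hf HD Hne Hinv.
  set (K := Kseq d f g0 D).
  assert (HP : forall i, closedS d (K i) /\ (exists z, K i z) /\ (forall z, K i z -> K i (f z)) /\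
                  (forall z, K (S i) z -> K i z)).
  { induction i as [|i IH].
    - destruct (nextK_spec d f g0 D 0) as [[w [Hw [_ He]]]|[_ He]];
        unfold K; simpl; rewrite He; repeat split; auto.
      all: try (intros; eapply OC_sub; eauto; fail).
    - destruct IH as [IH1 [IH2 [IH3 IH4]]].
      assert (Q : closedS d (K (S i)) /\ (exists z, K (S i) z) /\ (forall z, K (S i) z -> K (S i) (f z))).
      { unfold K; simpl. destruct (nextK_spec d f g0 (Kseq d f g0 D i) i) as [[w [Hw [_ He]]]|[_ He]];
        rewrite He; repeat split; auto.
        - apply OC_closed; auto.
        - exists w; apply OC_self; auto.
        - intros; apply OC_inv; auto. }
      destruct Q as [Q1 [Q2 Q3]]. repeat split; auto.
      intros z Hz. unfold K in Hz.
      change (Kseq d f g0 D (S (S i))) with (nextK d f g0 (Kseq d f g0 D (S i)) (S i)) in Hz.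
      destruct (nextK_spec d f g0 (Kseq d f g0 D (S i)) (S i)) as [[w [Hw [_ He]]]|[_ He]];
        rewrite He in Hz; auto. eapply OC_sub; eauto. }
  all: idtac.
  set (Kinf := fun z => forall i, K i z).
  assert (Hnest : forall i j, (i <= j)%nat -> forall z, K j z -> K i z).
  { intros i j Hij; induction Hij; auto. intros z Hz; apply IHHij; apply (HP m); auto. }
  assert (HKcl : closedS d Kinf).
  { intros z Hz i. apply (proj1 (HP i)). intros eps He. destruct (Hz eps He) as [y [Hy1 Hy2]]. eauto. }
  assert (HKne : exists z, Kinf z).
  { assert (Hch : forall i, {z | K i z}).
    { intro i. apply constructive_indefinite_description. apply (HP i). }
    set (s := fun i => proj1_sig (Hch i)).
    destruct (cluster d Hm Hc s) as [z Hz]. exists z. intro i.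
    apply (proj1 (HP i)). intros eps He. destruct (Hz eps He i) as [n [Hn1 Hn2]].
    exists (s n). split. { apply (Hnest i n Hn1). exact (proj2_sig (Hch n)). }
    rewrite (msym d Hm); auto. }
  assert (HKinv : forall z, Kinf z -> Kinf (f z)).
  { intros z Hz i. apply (proj1 (proj2 (proj2 (HP i)))); auto. }
  assert (Hmin : forall w y, Kinf w -> Kinf y -> OC d f w y).
  { intros w y Hw Hy. apply NNPP; intro Hn.
    specialize (Hy (S (g0 y))). unfold K in Hy; simpl in Hy.
    destruct (nextK_spec d f g0 (Kseq d f g0 D (g0 y)) (g0 y)) as [[w' [Hw' [[y' [Hy'1 Hy'2]] He]]]|[Hn' He]];
      rewrite He in Hy.
    - assert (y' = y) by (apply Hg0; auto). subst; auto.
    - apply Hn'. exists w; split; [apply Hw|]. exists y; auto. }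
  destruct (baire X d Kinf g0 (mnn d Hm) (msym d Hm) (mtri d Hm)) as [z [Hz [r [Hr Hiso]]]].
  - intros x y Hxy. assert (x = y) by (apply Hg0; auto). subst. apply (mxx d Hm).
  - intros s Hs. apply (closed_cluster d Kinf Hm Hc HKcl s Hs).
  - auto.
  - destruct (Hmin (f z) z (HKinv z Hz) Hz r Hr) as [n Hn].
    exists z, (S n). split; [apply (Hz O)|]. split; [lia|].
    rewrite iter_shift in Hn. simpl.
    symmetry. apply (meq d Hm). apply Hiso; auto.
    + apply (HKinv _ ). clear Hn. induction n; simpl; auto.
    + rewrite (msym d Hm); auto.
Qed.

Lemma abs_le_inv x y : Rabs x <= y -> - y <= x <= y.
Proof. unfold Rabs; destruct (Rcase_abs x); intros; lra. Qed.

Lemma rev_tri {X} (d : X -> X -> R) : is_metric d -> forall p z w, Rabs (d p z - d p w) <= d z w.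
Proof.
  intros Hm p z w. pose proof (mtri d Hm p z w). pose proof (mtri d Hm p w z).
  rewrite (msym d Hm w z) in H0. apply Rabs_le; lra.
Qed.

Lemma gap {X} (d : X -> X -> R) (p : X) (del0 : R) : is_metric d -> compact_space d ->
  countable_type X -> 0 < del0 -> exists r gam, 0 < gam /\ 0 < r - gam /\ r + gam < del0 /\
  forall z, d p z <= r - gam \/ r + gam <= d p z.
Proof.
  intros Hm Hc [g0 Hg0] Hd.
  set (a := del0/3). set (b := 2*del0/3).
  set (K := fun z => a <= d p z <= b).
  destruct (classic (exists z, K z)) as [Hne|Hem].
  2:{ exists (del0/2), (del0/6). repeat split; try lra. intros z.
      destruct (Rle_dec (d p z) (del0/2 - del0/6)) as [?|H1]; [left; auto|].
      destruct (Rle_dec (del0/2 + del0/6) (d p z)) as [?|H2]; [right; auto|].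
      exfalso. apply Hem. exists z. unfold K, a, b. lra. }
  set (e := fun z w => Rabs (d p z - d p w)).
  destruct (baire X e K g0) as [z [Hz [r0 [Hr0 Hiso]]]].
  - intros; apply Rabs_pos.
  - intros; unfold e; apply Rabs_minus_sym.
  - intros x y z; unfold e. replace (d p x - d p z) with ((d p x - d p y) + (d p y - d p z)) by ring.
    apply Rabs_triang.
  - intros x y H. assert (x = y) by (apply Hg0; auto). subst. unfold e. rewrite Rminus_diag, Rabs_R0; auto.
  - intros s Hs. destruct (cluster d Hm Hc s) as [z Hz]. exists z. split.
    + unfold K. split.
      * apply Rnot_lt_le; intro H1. destruct (Hz (a - d p z) ltac:(lra) O) as [n [_ Hn]].
        pose proof (rev_tri d Hm p (s n) z). specialize (Hs n). unfold K in Hs.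
        apply abs_le_inv in H. lra.
      * apply Rnot_lt_le; intro H1. destruct (Hz (d p z - b) ltac:(lra) O) as [n [_ Hn]].
        pose proof (rev_tri d Hm p (s n) z). specialize (Hs n). unfold K in Hs.
        apply abs_le_inv in H. lra.
    + intros eps He N. destruct (Hz eps He N) as [n [Hn1 Hn2]]. exists n; split; auto.
      pose proof (rev_tri d Hm p (s n) z). unfold e; lra.
  - auto.
  - set (s0 := d p z). set (h := Rmin r0 ((b - a)/2)).
    assert (Hh1 : h <= r0) by apply Rmin_l. assert (Hh2 : h <= (b-a)/2) by apply Rmin_r.
    assert (Hh0 : 0 < h) by (apply Rmin_glb_lt; unfold a, b; lra).
    unfold K in Hz. fold s0 in Hz.
    assert (Hno : forall y, a <= d p y <= b -> Rabs (s0 - d p y) < h -> d p y = s0).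
    { intros y Hy1 Hy2. specialize (Hiso y Hy1). unfold e in Hiso. fold s0 in Hiso.
      assert (H : Rabs (s0 - d p y) <= 0) by (right; apply Hiso; lra).
      apply abs_le_inv in H. lra. }
    destruct (Rle_dec s0 ((a+b)/2)).
    + exists (s0 + h/2), (h/2). repeat split; try (unfold a, b in *; lra).
      intro y. destruct (Rle_dec (d p y) (s0 + h/2 - h/2)) as [?|H1]; [left; auto|].
      destruct (Rle_dec (s0 + h/2 + h/2) (d p y)) as [?|H2]; [right; auto|].
      exfalso. assert (d p y = s0). { apply Hno. lra. rewrite Rabs_left; lra. } lra.
    + exists (s0 - h/2), (h/2). repeat split; try (unfold a, b in *; lra).
      intro y. destruct (Rle_dec (d p y) (s0 - h/2 - h/2)) as [?|H1]; [left; auto|].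
      destruct (Rle_dec (s0 - h/2 + h/2) (d p y)) as [?|H2]; [right; auto|].
      exfalso. assert (d p y = s0). { apply Hno. lra. rewrite Rabs_right; lra. } lra.
Qed.

Lemma NoDup_map_inj {A B} (F : A -> B) (l : list A) :
  NoDup l -> (forall x y, In x l -> In y l -> F x = F y -> x = y) -> NoDup (map F l).
Proof.
  induction 1 as [|x l Hx Hl IH]; intros Hinj; simpl; constructor.
  - intro H. apply in_map_iff in H. destruct H as [y [Hy1 Hy2]].
    assert (y = x) by (apply Hinj; simpl; auto). subst; auto.
  - apply IH. intros; apply Hinj; simpl; auto.
Qed.

Lemma final_step {X} (d : X -> X -> R) (f : X -> X) (q : nat) (p x : X) (del0 : R) :
  is_metric d -> compact_space d -> countable_type X -> continuous_map d f -> (0 < q)%nat ->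
  iter q f p = p ->
  (forall eps, 0 < eps -> forall N, exists m, (N <= m)%nat /\ d p (iter m (iter q f) x) < eps) ->
  0 < del0 -> (forall N, exists m, (N <= m)%nat /\ del0 <= d p (iter m (iter q f) x)) ->
  exists del : R, 0 < del /\
    exists S : X -> Prop, infinite_set S /\ delta_scrambled_set d f del S.
Proof.
  intros Hm Hc Hcnt Hf Hq Hp Hprox Hd0 Hfar.
  set (g := iter q f). change (iter q f) with g in Hprox, Hfar.
  assert (Hg : continuous_map d g) by (apply cont_iter; auto).
  set (y := fun m => iter m g x).
  destruct (gap d p del0 Hm Hc Hcnt Hd0) as [r [gam [Hgam [Hr1 [Hr2 Hside]]]]].
  assert (Hgp : forall k, iter k g p = p) by (intro; apply iter_fix; auto).
  assert (Hprox2 : forall a b eps N, 0 < eps -> exists m, (N <= m)%nat /\ d (y (a + m)%nat) (y (b + m)%nat) < eps).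
  { intros a b eps N He. destruct (cont_upto d g Hg (Nat.max a b) p (eps/2)) as [eta [Heta H1]]; [lra|].
    destruct (Hprox eta Heta N) as [m [Hm1 Hm2]]. exists m; split; auto.
    unfold y. rewrite !iter_add.
    pose proof (H1 _ Hm2 a ltac:(lia)). pose proof (H1 _ Hm2 b ltac:(lia)). rewrite !Hgp in *.
    pose proof (mtri d Hm (iter a g (iter m g x)) p (iter b g (iter m g x))).
    rewrite (msym d Hm _ p) in H2. lra. }
  assert (Hsep0 : forall c, (0 < c)%nat -> forall N, exists m, (N <= m)%nat /\
     ((d p (y m) <= r - gam /\ r + gam <= d p (y (c + m)%nat)) \/
      (r + gam <= d p (y m) /\ d p (y (c + m)%nat) <= r - gam))).
  { intros c Hc0 N. apply NNPP; intro Hn.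
    assert (Hrule : forall m, (N <= m)%nat -> d p (y m) <= r - gam -> d p (y (c + m)%nat) <= r - gam).
    { intros m Hm1 Hm2. destruct (Hside (y (c + m)%nat)) as [?|H2]; auto.
      exfalso; apply Hn; exists m; split; auto. }
    destruct (cont_upto d g Hg c p (r - gam)) as [eta [Heta H1]]; [lra|].
    destruct (Hprox eta Heta N) as [m1 [Hm1 Hm2]].
    assert (Hbase : forall k, (k <= c)%nat -> d p (y (k + m1)%nat) <= r - gam).
    { intros k Hk. pose proof (H1 _ Hm2 k Hk). rewrite Hgp in H. unfold y; rewrite iter_add. lra. }
    assert (Hall : forall t k, (k <= t)%nat -> d p (y (k + m1)%nat) <= r - gam).
    { induction t; intros k Hk.
      - apply Hbase; lia.
      - destruct (Nat.eq_dec k (S t)) as [->|Hne]; [|apply IHt; lia].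
        destruct (Compare_dec.le_lt_dec (S t) c) as [Hle|Hlt]; [apply Hbase; auto|].
        replace (S t + m1)%nat with (c + (S t - c + m1))%nat by lia.
        apply Hrule; [lia|]. apply IHt; lia. }
    destruct (Hfar m1) as [m [Hm3 Hm4]].
    pose proof (Hall (m - m1)%nat (m - m1)%nat (le_n _)). replace (m - m1 + m1)%nat with m in H by lia.
    unfold y in H. lra. }
  assert (Hsep : forall a b N, (a < b)%nat -> exists m, (N <= m)%nat /\ 2 * gam <= d (y (a + m)%nat) (y (b + m)%nat)).
  { intros a b N Hab. destruct (Hsep0 (b - a)%nat ltac:(lia) (N + a)%nat) as [m [Hm1 Hm2]].
    exists (m - a)%nat. split; [lia|].
    replace (a + (m - a))%nat with m by lia. replace (b + (m - a))%nat with (b - a + m)%nat by lia.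
    pose proof (rev_tri d Hm p (y m) (y (b - a + m)%nat)). apply abs_le_inv in H. lra. }
  assert (Hsep' : forall a b N, a <> b -> exists m, (N <= m)%nat /\ 2 * gam <= d (y (a + m)%nat) (y (b + m)%nat)).
  { intros a b N Hab. destruct (Nat.lt_gt_cases a b) as [[H|H] _]; auto.
    - destruct (Hsep b a N H) as [m [H1 H2]]. exists m; split; auto. rewrite (msym d Hm); auto. }
  assert (Hconv : forall n a, iter (n * q) f (iter (a * q) f x) = y (a + n)%nat).
  { intros n a. rewrite <- iter_add. replace (n * q + a * q)%nat with ((a + n) * q)%nat by ring.
    unfold y, g. apply iter_mul. }
  exists (2 * gam). split; [lra|].
  exists (fun z => exists a, z = iter (a * q) f x). split.
  - intro l. apply NNPP; intro Hn.
    set (L := map (fun a => iter (a * q) f x) (seq 0 (S (length l)))).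
    assert (HND : NoDup L).
    { apply NoDup_map_inj; [apply seq_NoDup|]. intros a b _ _ Hab.
      destruct (Nat.eq_dec a b) as [?|Hne]; auto. exfalso.
      destruct (Hsep' a b O Hne) as [m [_ Hm2]]. rewrite <- !Hconv, Hab in Hm2.
      rewrite (mxx d Hm) in Hm2. lra. }
    assert (Hinc : incl L l).
    { intros z Hz. apply NNPP; intro Hz2. apply Hn. exists z. split; auto.
      unfold L in Hz. apply in_map_iff in Hz. destruct Hz as [a [Ha _]]. eauto. }
    pose proof (NoDup_incl_length HND Hinc). unfold L in H. rewrite length_map, length_seq in H. lia.
  - intros u v [a ->] [b ->] Huv.
    assert (Hab : a <> b) by (intro; subst; auto).
    split.
    + intros eps He N. destruct (Hprox2 a b eps N He) as [m [Hm1 Hm2]].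
      exists (m * q)%nat. split; [nia|]. rewrite !Hconv. auto.
    + intros eps He N. destruct (Hsep' a b N Hab) as [m [Hm1 Hm2]].
      exists (m * q)%nat. split; [nia|]. rewrite !Hconv. lra.
Qed.

Lemma pigeon (P : nat -> R -> nat -> Prop) (Q : nat) :
  (forall k e e' m, P k e m -> e <= e' -> P k e' m) ->
  (forall e, 0 < e -> forall N, exists k, (k <= Q)%nat /\ exists m, (N <= m)%nat /\ P k e m) ->
  exists k, (k <= Q)%nat /\ forall e, 0 < e -> forall N, exists m, (N <= m)%nat /\ P k e m.
Proof.
  intros Hmon. induction Q as [|Q IH]; intros H.
  - exists O; split; auto. intros e He N. destruct (H e He N) as [k [Hk Hm]].
    assert (k = O) by lia; subst; auto.
  - destruct (classic (forall e, 0 < e -> forall N, exists m, (N <= m)%nat /\ P (S Q) e m)) as [Hy|Hn].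
    + exists (S Q); split; auto.
    + assert (Hn2 : exists e0 N0, 0 < e0 /\ forall m, (N0 <= m)%nat -> ~ P (S Q) e0 m).
      { apply NNPP; intro H1. apply Hn. intros e He N. apply NNPP; intro H2. apply H1.
        exists e, N; split; auto. intros m Hm Hp. apply H2; eauto. }
      destruct Hn2 as [e0 [N0 [He0 HN0]]].
      destruct IH as [k [Hk Hk2]].
      * intros e He N. destruct (H (Rmin e e0) ltac:(apply Rmin_glb_lt; auto) (Nat.max N N0))
          as [k [Hk [m [Hm Hp]]]].
        destruct (Nat.eq_dec k (S Q)) as [->|Hne].
        -- exfalso. apply (HN0 m); [lia|]. eapply Hmon; eauto. apply Rmin_r.
        -- exists k; split; [lia|]. exists m; split; [lia|]. eapply Hmon; eauto. apply Rmin_l.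
      * exists k; split; auto.
Qed.

Lemma divstep n q : (0 < q)%nat -> exists m k, (k <= q)%nat /\ (n + k = m * q)%nat.
Proof.
  intros Hq. exists (S (n / q)), (q - n mod q)%nat.
  pose proof (Nat.div_mod_eq n q). pose proof (Nat.mod_upper_bound n q ltac:(lia)).
  split; [lia|]. simpl. nia.
Qed.

Theorem corollary1p6 (X : Type) (d : X -> X -> R) (f : X -> X) :
  is_metric d -> compact_space d -> countable_type X -> continuous_map d f ->
  (exists u v : X, scrambled_pair d f u v) ->
  exists del : R, 0 < del /\
    exists S : X -> Prop, infinite_set S /\ delta_scrambled_set d f del S.
Proof.
  intros Hm Hc Hcnt Hf [u [v [del [Hdel [Hlinf Hlsup]]]]].
  set (D := fun z => forall eps, 0 < eps -> forall N, exists n, (N <= n)%nat /\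
               d (iter n f u) z < eps /\ d (iter n f v) z < eps).
  assert (HDc : closedS d D).
  { intros z Hz eps He N. destruct (Hz (eps/2) ltac:(lra)) as [y [Hy Hzy]].
    destruct (Hy (eps/2) ltac:(lra) N) as [n [Hn [H1 H2]]]. exists n; split; auto.
    pose proof (mtri d Hm (iter n f u) y z). pose proof (mtri d Hm (iter n f v) y z).
    rewrite (msym d Hm y z) in *. split; lra. }
  assert (HDi : forall z, D z -> D (f z)).
  { intros z Hz eps He N. destruct (Hf z eps He) as [e1 [He1 H1]].
    destruct (Hz e1 He1 N) as [n [Hn [H2 H3]]]. exists (S n); split; [lia|]. simpl.
    rewrite (msym d Hm _ (f z)), (msym d Hm (f _) (f z)). split; apply H1; rewrite (msym d Hm); auto. }
  assert (HDn : exists z, D z).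
  { assert (Hch : forall k, {n | (k <= n)%nat /\ d (iter n f u) (iter n f v) < / (INR k + 1)}).
    { intro k. apply constructive_indefinite_description. apply Hlinf.
      apply Rinv_0_lt_compat. pose proof (pos_INR k); lra. }
    set (t := fun k => proj1_sig (Hch k)).
    destruct (cluster d Hm Hc (fun k => iter (t k) f u)) as [z Hz]. exists z.
    intros eps He N. destruct (archimed_cor1 (eps/2) ltac:(lra)) as [K [HK1 HK2]].
    destruct (Hz (eps/2) ltac:(lra) (N + K)%nat) as [k [Hk1 Hk2]].
    destruct (proj2_sig (Hch k)) as [Ht1 Ht2]. fold (t k) in Ht1, Ht2.
    exists (t k). split; [lia|]. split; [lra|].
    assert (/ (INR k + 1) <= / INR K).
    { apply Rinv_le_contravar. apply lt_0_INR; auto. rewrite <- S_INR. apply le_INR; lia. }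
    pose proof (mtri d Hm (iter (t k) f v) (iter (t k) f u) z). rewrite (msym d Hm (iter (t k) f v) (iter (t k) f u)) in H0. cbv beta in Hk2. lra. }
  destruct (periodic_point d f D Hm Hc Hcnt Hf HDc HDn HDi) as [p [q [Hp [Hq Hpq]]]].
  set (g := iter q f).
  assert (Hpig : exists k, (k <= q)%nat /\ forall e, 0 < e -> forall N, exists m, (N <= m)%nat /\
           (d (iter k f p) (iter m g u) < e /\ d (iter k f p) (iter m g v) < e)).
  { apply (pigeon (fun k e m => d (iter k f p) (iter m g u) < e /\ d (iter k f p) (iter m g v) < e)).
    - intros k e e' m [H1 H2] He; split; lra.
    - intros e He N. destruct (cont_upto d f Hf q p e He) as [eta [Heta H1]].
      destruct (Hp eta Heta (N * q)%nat) as [n [Hn [H2 H3]]].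
      destruct (divstep n q Hq) as [m [k [Hk Hnk]]].
      exists k; split; auto. exists m; split; [nia|].
      unfold g. rewrite <- !iter_mul, <- Hnk, (Nat.add_comm n k), !iter_add.
      split; apply H1; auto; rewrite (msym d Hm); auto. }
  destruct Hpig as [k [Hk Hpk]].
  set (p' := iter k f p).
  assert (Hp' : iter q f p' = p').
  { unfold p'. rewrite <- iter_add, Nat.add_comm, iter_add, Hpq. auto. }
  assert (Hdich : forall x, (exists del0, 0 < del0 /\ forall N, exists m, (N <= m)%nat /\ del0 <= d p' (iter m g x))
      \/ (forall e, 0 < e -> exists N, forall m, (N <= m)%nat -> d p' (iter m g x) < e)).
  { intro x. destruct (classic (forall e, 0 < e -> exists N, forall m, (N <= m)%nat -> d p' (iter m g x) < e)) as [H|H]; auto.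
    left. apply NNPP; intro H1. apply H. intros e He. apply NNPP; intro H2. apply H1.
    exists e; split; auto. intro N. apply NNPP; intro H3. apply H2. exists N. intros m Hm'.
    apply Rnot_le_lt. intro H4. apply H3. exists m; auto. }
  destruct (Hdich u) as [[d0 [Hd0 Hfar]]|Hu].
  { apply (final_step d f q p' u d0 Hm Hc Hcnt Hf Hq Hp'); auto.
    intros e He N. destruct (Hpk e He N) as [m [Hm1 [Hm2 _]]]. eauto. }
  destruct (Hdich v) as [[d0 [Hd0 Hfar]]|Hv].
  { apply (final_step d f q p' v d0 Hm Hc Hcnt Hf Hq Hp'); auto.
    intros e He N. destruct (Hpk e He N) as [m [Hm1 [_ Hm2]]]. eauto. }
  exfalso.
  destruct (cont_upto d f Hf q p' (del/4) ltac:(lra)) as [eta [Heta H1]].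
  destruct (Hu eta Heta) as [Nu HNu]. destruct (Hv eta Heta) as [Nv HNv].
  destruct (Hlsup (del/2) ltac:(lra) ((Nu + Nv) * q)%nat) as [n [Hn Hn2]].
  pose proof (Nat.div_mod_eq n q). pose proof (Nat.mod_upper_bound n q ltac:(lia)).
  set (m := (n / q)%nat) in *. set (k' := (n mod q)%nat) in *.
  assert (Hmb : (Nu + Nv <= m)%nat) by nia.
  assert (Hn3 : forall x, iter n f x = iter k' f (iter m g x)).
  { intro x. unfold g. rewrite <- iter_mul, <- iter_add. f_equal. lia. }
  rewrite !Hn3 in Hn2.
  pose proof (H1 _ (HNu m ltac:(lia)) k' ltac:(lia)).
  pose proof (H1 _ (HNv m ltac:(lia)) k' ltac:(lia)).
  pose proof (mtri d Hm (iter k' f (iter m g u)) (iter k' f p') (iter k' f (iter m g v))).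
  rewrite (msym d Hm (iter k' f (iter m g u)) (iter k' f p')) in H4. lra.
Qed.
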